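(* Suppose that (A1) and (V4') hold, and let $\theta^*\in\mathbb{R}^d$ satisfy $\bar f(\theta^* )=0$. Then there are positive constants $\delta_1$, $b$ and $c$ such that every solution of $\frac{d}{dt}\vartheta_t=\bar f(\vartheta_t)$ satisfies, with $\tilde\vartheta_t=\vartheta_t-\theta^*$, $$\|\tilde\vartheta_t\|\le b\|\tilde\vartheta_0\|e^{-\delta_1t}\qquad\text{for all } 0\le t\le\tau_c,\quad \tau_c=\min\{t\ge0:\|\tilde\vartheta_t\|\le c\}.$$
   Context: $\bar f\colon\mathbb{R}^d\to\mathbb{R}^d$ is the mean vector field of a QSA ODE $\frac{d}{dt}\Theta_t=\alpha f(\Theta_t,\xi_t)$, where $\xi_t$ is an almost periodic probing signal and $\bar f(\theta)$ is the time average of $f(\theta,\xi_t)$. (A1): there is $L_f<\infty$ with $\|\bar f(\theta')-\bar f(\theta)\|\le L_f\|\theta'-\theta\|$ and $\|f(\theta',\xi)-f(\theta,\xi)\|+\|f(\theta,\xi')-f(\theta,\xi)\|\le L_f[\|\theta'-\theta\|+\|\xi'-\xi\|]$ for all arguments. (V4'): there exist $V\colon\mathbb{R}^d\to\mathbb{R}_+$ and constants $L_V<\infty$, $\delta_0,\delta,T>0$ such that $|V(\theta')-V(\theta)|\le L_V\|\theta'-\theta\|$ for all $\theta,\theta'$, $V(\theta)\ge\|\theta\|$ when $\|\theta\|\ge\delta_0^{-1}$, and every solution of $\frac{d}{dt}\vartheta=\bar f(\vartheta)$ satisfies $V(\vartheta_{\tau+T})-V(\vartheta_\tau)\le-\delta\|\vartheta_\tau\|$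 for all $\tau\ge0$ with $\|\vartheta_\tau\|>\delta^{-1}$. If the set defining $\tau_c$ is empty, $\tau_c=\infty$. *)

(* Defs.v *)
From HB Require Import structures.
From mathcomp Require Import all_boot all_order all_algebra.
From mathcomp Require Import all_classical all_reals all_analysis.
Set Implicit Arguments. Unset Strict Implicit. Unset Printing Implicit Defensive.
Import Order.TTheory GRing.Theory Num.Theory.
Import numFieldNormedType.Exports.
Local Open Scope classical_set_scope.
Local Open Scope ring_scope.

Definition enorm {R : realType} {d : nat} (v : 'rV[R]_d) : R :=
  Num.sqrt (\sum_(i < d) v ord0 i ^+ 2).

Definition is_mean_ode_solution {R : realType} {d : nat}
  (fbar : 'rV[R]_d -> 'rV[R]_d) (theta : R -> 'rV[R]_d) : Prop :=
  {within `[0, +oo[, continuous theta} /\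
  (forall t : R, 0 < t -> is_derive t 1 theta (fbar (theta t))).

(* tau_c = min { t >= 0 : || theta_t - thstar || <= c }, +oo if empty
   (taken as an infimum in the extended reals; the set is closed, so the
   infimum is attained whenever the set is nonempty). *)
Definition tau_c {R : realType} {d : nat} (theta : R -> 'rV[R]_d)
  (thstar : 'rV[R]_d) (c : R) : \bar R :=
  ereal_inf [set t%:E | t in [set t : R | 0 <= t /\ enorm (theta t - thstar) <= c]].

(* Main.v *)
Require Import Defs.
From HB Require Import structures.
From mathcomp Require Import all_boot all_order all_algebra.
From mathcomp Require Import all_classical all_reals all_analysis.
From mathcomp Require Import ring lra.
Import Order.TTheory GRing.Theory Num.Theory.
Import numFieldNormedType.Exports.
Local Open Scope classical_set_scope.
Local Open Scope ring_scope.

Section Enorm.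
Context {R : realType} {d : nat}.
Implicit Types u v : 'rV[R]_d.

Lemma enorm_ge0 v : 0 <= enorm v.
Proof. exact: sqrtr_ge0. Qed.

Lemma enorm_sqr v : enorm v ^+ 2 = \sum_(i < d) v ord0 i ^+ 2.
Proof. by rewrite /enorm sqr_sqrtr // sumr_ge0 // => i _; rewrite sqr_ge0. Qed.

Lemma enormN v : enorm (- v) = enorm v.
Proof. by rewrite /enorm; under eq_bigr do rewrite mxE sqrrN. Qed.

Lemma cs_sqr u v : (\sum_(i < d) u ord0 i * v ord0 i) ^+ 2 <=
  (\sum_(i < d) u ord0 i ^+ 2) * (\sum_(i < d) v ord0 i ^+ 2).
Proof.
set A := \sum_(i < d) _ ^+ 2; set B := \sum_(i < d) _ ^+ 2; set P := \sum_(i < d) _.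
have key s t : 0 <= s ^+ 2 * A - 2 * s * t * P + t ^+ 2 * B.
  have -> : s ^+ 2 * A - 2 * s * t * P + t ^+ 2 * B =
     \sum_(i < d) (s * u ord0 i - t * v ord0 i) ^+ 2.
    rewrite /A /B /P !mulr_sumr -!sumrN -!big_split /=.
    apply: eq_bigr => i _; ring.
  by apply: sumr_ge0 => i _; rewrite sqr_ge0.
have B0 : 0 <= B by apply: sumr_ge0 => i _; rewrite sqr_ge0.
have [Bz|Bp] := eqVneq B 0.
  have v0 : forall i, v ord0 i = 0.
    move=> i; apply/eqP; rewrite -sqrf_eq0; apply/eqP.
    move/eqP: Bz; rewrite psumr_eq0 => [/allP /(_ i) /= H|j _]; last by rewrite sqr_ge0.
    by apply/eqP/H; rewrite mem_index_enum.
  rewrite /P big1 ?expr0n //= ?mulr_ge0 // ?B0 //.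
    by apply: sumr_ge0 => i _; rewrite sqr_ge0.
  by move=> i _; rewrite v0 mulr0.
have Bpos : 0 < B by rewrite lt_def Bp B0.
have := key B P.
have -> : B ^+ 2 * A - 2 * B * P * P + P ^+ 2 * B = B * (A * B - P ^+ 2) by ring.
by rewrite pmulr_rge0 // subr_ge0.
Qed.

Lemma cs u v : \sum_(i < d) u ord0 i * v ord0 i <= enorm u * enorm v.
Proof.
apply: le_trans (ler_norm _) _.
rewrite -[X in X <= _]sqrtr_sqr /enorm -sqrtrM; last by apply: sumr_ge0 => i _; rewrite sqr_ge0.
by rewrite ler_sqrt ?cs_sqr // mulr_ge0 // sumr_ge0 // => i _; rewrite sqr_ge0.
Qed.

Lemma enormD u v : enorm (u + v) <= enorm u + enorm v.
Proof.
rewrite -(ler_pXn2r (n:=2)) // ?nnegrE ?enorm_ge0 ?addr_ge0 ?enorm_ge0 //.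
rewrite enorm_sqr.
have -> : \sum_(i < d) (u + v) ord0 i ^+ 2 = \sum_(i < d) u ord0 i ^+ 2 +
   2 * (\sum_(i < d) u ord0 i * v ord0 i) + \sum_(i < d) v ord0 i ^+ 2.
  rewrite mulr_sumr -!big_split /=; apply: eq_bigr => i _; rewrite mxE. ring.
rewrite sqrrD -!enorm_sqr lerD2r lerD2l.
rewrite -mulr_natl. set X := \sum_(i < d) _. have := cs u v. rewrite -/X. nra.
Qed.

Lemma enormB u v : enorm u <= enorm (u - v) + enorm v.
Proof. by have := enormD (u - v) v; rewrite subrK. Qed.

Lemma enormB' u v : enorm (u - v) <= enorm u + enorm v.
Proof. by have := enormD u (- v); rewrite enormN. Qed.

End Enorm.

Section Gron.
Context {R : realType}.

Lemma is_derive_sq (f : R -> R) (x df : R) : is_derive x 1 f df ->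
  is_derive x 1 (fun y => f y ^+ 2) (2 * f x * df).
Proof.
move=> H.
have -> : (fun y => f y ^+ 2) = f * f by apply/funext => y; rewrite expr2.
have := is_deriveM H H.
move=> H2; apply: is_derive_eq.
by rewrite /GRing.scale /=; ring.
Qed.

Lemma is_derive_bigsum n (h : 'I_n -> R -> R) (x : R) (dh : 'I_n -> R) :
  (forall i, is_derive x 1 (h i) (dh i)) ->
  is_derive x 1 (fun y => \sum_(i < n) h i y) (\sum_(i < n) dh i).
Proof.
move=> H; rewrite -fct_sumE; exact: is_derive_sum.
Qed.

Lemma is_derive_lin (k x : R) : is_derive x 1 (fun y => k * y) k.
Proof.
have -> : (fun y => k * y) = k *: (@id R) by apply/funext => y.
have := is_deriveZ k (is_derive_id x 1).
by move=> H; apply: is_derive_eq; rewrite /GRing.scale /= mulr1.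
Qed.

End Gron.

Lemma gronwall (R : realType) d (fbar : 'rV[R]_d -> 'rV[R]_d) (thstar : 'rV[R]_d) (L : R) :
  0 < L -> (forall th, enorm (fbar th) <= L * enorm (th - thstar)) ->
  forall vth, is_mean_ode_solution fbar vth ->
  forall s t, 0 <= s -> s <= t ->
  enorm (vth t - thstar) <= expR (L * (t - s)) * enorm (vth s - thstar).
Proof.
move=> L0 hf vth [hc hd] s t s0 st.
pose h (i : 'I_d) := fun y => vth y ord0 i - thstar ord0 i.
pose N := fun y => \sum_(i < d) h i y ^+ 2.
have NE y : N y = enorm (vth y - thstar) ^+ 2.
  by rewrite enorm_sqr; apply: eq_bigr => i _; rewrite !mxE.
have dh (x : R) (i : 'I_d) : 0 < x -> is_derive x 1 (h i) (fbar (vth x) ord0 i).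
  move=> x0; have hdx := hd x x0.
  have dv : derivable vth x 1 by case: hdx.
  have dvi : derivable (fun y => vth y ord0 i) x 1 by move/derivable_mxP: dv; apply.
  have Dv : 'D_1 vth x = fbar (vth x) by apply: derive_val.
  have Hi : is_derive x 1 (fun y => vth y ord0 i) (fbar (vth x) ord0 i).
    apply: DeriveDef => //; move: Dv; rewrite derive_mx // => <-; by rewrite mxE.
  have := is_deriveB Hi (is_derive_cst (thstar ord0 i) x 1).
  by move=> H; apply: is_derive_eq; rewrite subr0.
have dN (x : R) : 0 < x -> is_derive x 1 N
    (\sum_(i < d) (2 * h i x * fbar (vth x) ord0 i)).
  move=> x0; apply: is_derive_bigsum => i; apply: is_derive_sq; exact: dh.
have dNle (x : R) : 0 < x -> \sum_(i < d) (2 * h i x * fbar (vth x) ord0 i) <= 2 * L * N x.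
  move=> x0.
  set S := \sum_(i < d) _.
  have hfx := hf (vth x).
  have e0 := enorm_ge0 (vth x - thstar).
  have e1 := enorm_ge0 (fbar (vth x)).
  have hS : L * S <= L ^+ 2 * N x + enorm (fbar (vth x)) ^+ 2.
    rewrite enorm_sqr /S /N mulr_sumr mulr_sumr -big_split /=.
    apply: ler_sum => i _.
    set a := h i x; set b := fbar (vth x) ord0 i.
    have : 0 <= (L * a - b) ^+ 2 by rewrite sqr_ge0.
    nra.
  have hY : enorm (fbar (vth x)) ^+ 2 <= L ^+ 2 * N x.
    rewrite NE -exprMn; rewrite ler_pXn2r // ?nnegrE ?mulr_ge0 // ltW //.
  rewrite -(ler_pM2l L0); nra.
pose e := fun y : R => expR (- (2 * L) * y).
pose g := fun y => e y * N y.
have de (x : R) : is_derive x 1 e (expR (- (2 * L) * x) * (- (2 * L))).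
  exact: (is_derive1_comp (is_derive_expR _) (is_derive_lin _ x)).
have dg (x : R) : 0 < x -> is_derive x 1 g
   (e x *: (\sum_(i < d) (2 * h i x * fbar (vth x) ord0 i)) + N x *: (expR (- (2 * L) * x) * (- (2 * L)))).
  move=> x0; exact: (is_deriveM (de x) (dN x x0)).
pose Nf := fun v : 'rV[R]_d => \sum_(i < d) (v ord0 i - thstar ord0 i) ^+ 2.
have Nfc : continuous Nf.
  rewrite /Nf; apply: (continuous_big (op := +%R)); first exact: add_continuous.
  move=> i _ v.
  have hi : {for v, continuous (fun w : 'rV[R]_d => w ord0 i - thstar ord0 i)}.
    apply: continuousB; [exact: (@coord_continuous R 1 d ord0 i v) | exact: cst_continuous].
  have -> : (fun w : 'rV[R]_d => (w ord0 i - thstar ord0 i) ^+ 2) =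
    (fun w : 'rV[R]_d => w ord0 i - thstar ord0 i) \* (fun w : 'rV[R]_d => w ord0 i - thstar ord0 i).
    by apply/funext => w; rewrite /= expr2.
  exact: continuousM.
have gc : {within `[0, +oo[, continuous g}.
  have -> : g = e \* (Nf \o vth) by [].
  move=> x; apply: continuousM.
    apply: continuous_subspaceT => y.
    apply: differentiable_continuous; apply/derivable1_diffP.
    by case: (de y).
  exact: (continuous_comp (hc x) (Nfc (vth x))).
have gmon : g t <= g s.
  apply: (ler0_derive1_nincry (a := 0)) => //.
  - move=> x; rewrite in_itv /= andbT => x0; by case: (dg x x0).
  - move=> x; rewrite in_itv /= andbT => x0.
    have Hd := dg x x0; rewrite derive1E derive_val /GRing.scale /=.
    have ex0 : 0 < e x by apply: expR_gt0.
    have := dNle x x0; set S := \sum_(i < d) _ => HS.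
    rewrite -/(e x).
    have : e x * S <= e x * (2 * L * N x) by rewrite ler_pM2l.
    lra.
have E1 : N t = expR (2 * L * t) * g t.
  by rewrite /g /e mulrA -expRD mulNr addrN expR0 mul1r.
have E2 : expR (L * (t - s) * 2%:R) * N s = expR (2 * L * t) * g s.
  rewrite /g /e mulrA -expRD; congr (expR _ * _); ring.
rewrite -(ler_pXn2r (n:=2)) // ?nnegrE ?mulr_ge0 ?enorm_ge0 ?expR_ge0 //.
rewrite exprMn -expRM_natr -!NE E1 E2 ler_pM2l //; exact: expR_gt0.
Qed.

Lemma grid_exists (R : realType) (T t : R) : 0 < T -> 0 < t ->
  exists j : nat, j%:R * T < t /\ t <= j.+1%:R * T.
Proof.
move=> T0 t0.
suff H : forall n : nat, t <= n%:R * T -> exists j : nat, j%:R * T < t /\ t <= j.+1%:R * T.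
  apply: (H (Num.truncn (t / T)).+1).
  have := Num.Theory.truncnS_gt (t / T) => h.
  by rewrite -ler_pdivrMr // ltW.
elim=> [|n IH].
  by rewrite mul0r => /(lt_le_trans t0); rewrite ltxx.
move=> h; case: (leP t (n%:R * T)) => [/IH//|lt]; by exists n.
Qed.

Theorem lemmaA10 (R : realType) (d m : nat)
  (f : 'rV[R]_d -> 'rV[R]_m -> 'rV[R]_d) (fbar : 'rV[R]_d -> 'rV[R]_d)
  (* (A1) *)
  (L_f : R)
  (hA1bar : forall th th' : 'rV[R]_d, enorm (fbar th' - fbar th) <= L_f * enorm (th' - th))
  (hA1 : forall (th th' : 'rV[R]_d) (xi xi' : 'rV[R]_m),
      enorm (f th' xi - f th xi) + enorm (f th xi' - f th xi)
        <= L_f * (enorm (th' - th) + enorm (xi' - xi)))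
  (* (V4') *)
  (V : 'rV[R]_d -> R) (L_V delta0 delta T : R)
  (hV0 : forall th, 0 <= V th)
  (hd0 : 0 < delta0) (hd : 0 < delta) (hT : 0 < T)
  (hVlip : forall th th', `|V th' - V th| <= L_V * enorm (th' - th))
  (hVgrow : forall th, delta0^-1 <= enorm th -> enorm th <= V th)
  (hVdrift : forall vth : R -> 'rV[R]_d, is_mean_ode_solution fbar vth ->
      forall tau : R, 0 <= tau -> delta^-1 < enorm (vth tau) ->
      V (vth (tau + T)) - V (vth tau) <= - (delta * enorm (vth tau)))
  (* equilibrium *)
  (thstar : 'rV[R]_d) (hstar : fbar thstar = 0) :
  exists delta1 b c : R, [/\ 0 < delta1, 0 < b, 0 < c &
    forall vth : R -> 'rV[R]_d, is_mean_ode_solution fbar vth ->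
      forall t : R, 0 <= t -> ((t%:E <= tau_c vth thstar c)%E) ->
        enorm (vth t - thstar) <= b * enorm (vth 0 - thstar) * expR (- (delta1 * t))].
Proof.
pose L := `|L_f| + 1.
have L0 : 0 < L by rewrite /L ltr_pwDr.
have hf th : enorm (fbar th) <= L * enorm (th - thstar).
  have := hA1bar thstar th; rewrite hstar subr0 => h.
  apply: (le_trans h); apply: ler_wpM2r; first exact: enorm_ge0.
  by rewrite /L (le_trans (ler_norm _)) // lerDl.
pose a := enorm thstar.
have a0 : 0 <= a by exact: enorm_ge0.
pose Vs := V thstar.
pose K := `|Vs| + `|L_V| * (a + 1) + delta + 1.
have K1 : delta + 1 <= K.
  by rewrite /K -addrA lerDr addr_ge0 // mulr_ge0 // addr_ge0.
have K0 : 0 < K by lra.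
pose eps := delta / K.
have eps0 : 0 < eps by rewrite divr_gt0.
have epsK : eps * K = delta by rewrite /eps divfK // gt_eqF.
have eps1 : eps < 1 by nra.
pose q := 1 - eps.
have q0 : 0 <= q by rewrite /q subr_ge0 ltW.
have qe : q <= expR (- eps) by have := expR_ge1Dx (- eps).
pose c := 2 * a + 1 + delta^-1 + delta0^-1.
have di0 : 0 < delta^-1 by rewrite invr_gt0.
have d0i0 : 0 < delta0^-1 by rewrite invr_gt0.
pose delta1 := eps / T.
pose b := 2 * expR (L * T) * K * expR eps.
have eLT : 1 <= expR (L * T).
  have h1 := expR_ge1Dx (L * T).
  have h2 : 0 <= L * T by rewrite mulr_ge0 // ltW.
  lra.
have eeps : 1 <= expR eps.
  have := expR_ge1Dx eps; lra.
have Vbound th : V th <= `|Vs| + `|L_V| * enorm (th - thstar).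
  have := hVlip thstar th => h.
  have h1 := ler_norm (V th - Vs).
  have h2 : L_V * enorm (th - thstar) <= `|L_V| * enorm (th - thstar).
    by apply: ler_wpM2r; [exact: enorm_ge0 | exact: ler_norm].
  have h3 := ler_norm Vs.
  rewrite -/Vs; lra.
exists delta1, b, c; split.
- by rewrite divr_gt0.
- rewrite /b; apply: mulr_gt0; last exact: expR_gt0.
  by rewrite mulr_gt0 // mulr_gt0 // expR_gt0.
- rewrite /c; lra.
move=> vth hsol t t0 ht.
pose r y := enorm (vth y - thstar).
have r0 y : 0 <= r y by exact: enorm_ge0.
have tauP y : 0 <= y -> (y%:E < tau_c vth thstar c)%E -> c < r y.
  move=> y0 hy; rewrite ltNge; apply/negP => hle.
  have : (tau_c vth thstar c <= y%:E)%E.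
    by apply: ereal_inf_lbound; exists y.
  by rewrite leNgt hy.
have nbig y : c < r y -> [/\ 1 <= enorm (vth y), a <= enorm (vth y),
    delta^-1 < enorm (vth y) & delta0^-1 <= enorm (vth y)].
  move=> h; have := enormB' (vth y) thstar; rewrite -/a -/(r y) => h'.
  rewrite /c in h; split; lra.
have step (j : nat) : ((j%:R * T)%:E < tau_c vth thstar c)%E ->
    V (vth (j%:R * T)) <= q ^+ j * V (vth 0).
  elim: j => [|j IH].
    by rewrite mul0r expr0 mul1r.
  move=> hj.
  have jT0 : 0 <= j%:R * T by rewrite mulr_ge0 // ltW.
  have hj' : ((j%:R * T)%:E < tau_c vth thstar c)%E.
    apply: le_lt_trans hj; rewrite lee_fin; apply: ler_wpM2r; [exact: ltW | by rewrite ler_nat].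
  have := IH hj' => Vj.
  have rc := tauP _ jT0 hj'.
  have [n1 na ndel nd0] := nbig _ rc.
  have dr := hVdrift vth hsol _ jT0 ndel.
  have -> : j.+1%:R * T = j%:R * T + T by rewrite -addn1 natrD mulrDl mul1r.
  set x := vth (j%:R * T) in Vj dr n1 na ndel nd0 rc *.
  have Vx : V x <= K * enorm x.
    have h1 := Vbound x.
    have h2 := enormB' x thstar. rewrite -/a in h2.
    have h3 : `|L_V| * enorm (x - thstar) <= `|L_V| * (enorm x + a).
      by apply: ler_wpM2l.
    have h4 : `|Vs| + `|L_V| * (enorm x + a) <= K * enorm x.
      rewrite /K.
      have e1 : 0 <= `|Vs| by [].
      have e2 : 0 <= `|L_V| by [].
      have p1 : 0 <= `|Vs| * (enorm x - 1) by rewrite mulr_ge0 // subr_ge0.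
      have p2 : 0 <= `|L_V| * (a * (enorm x - 1)) by rewrite mulr_ge0 // mulr_ge0 // subr_ge0.
      have p3 : 0 <= (delta + 1) * enorm x by rewrite mulr_ge0 // ?addr_ge0 ?ltW //; lra.
      nra.
    lra.
  have hdec : eps * V x <= delta * enorm x.
    rewrite -epsK -mulrA; apply: ler_wpM2l; lra.
  have : V (vth (j%:R * T + T)) <= q * V x by rewrite /q; lra.
  move=> h; apply: (le_trans h); rewrite exprS -mulrA; exact: ler_wpM2l.
have b1 : 1 <= b.
  rewrite /b.
  have h1 : 1 <= 2 * expR (L * T) by lra.
  have h2 : 1 <= 2 * expR (L * T) * K by nra.
  nra.
have [->|tpos] := eqVneq t 0.
  rewrite mulr0 oppr0 expR0 mulr1.
  have := r0 0; rewrite -/(r 0); nra.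
have tp : 0 < t by rewrite lt_def tpos t0.
have tau0 : ((0:R)%:E < tau_c vth thstar c)%E by apply: lt_le_trans ht; rewrite lte_fin.
have rc0 := tauP 0 (lexx 0) tau0.
have r01 : 1 <= r 0 by rewrite /c in rc0; lra.
have V0 : V (vth 0) <= K * r 0.
  have h1 := Vbound (vth 0).
  have e1 : 0 <= `|Vs| by [].
  have e2 : 0 <= `|L_V| by [].
  have p1 : 0 <= `|Vs| * (r 0 - 1) by rewrite mulr_ge0 // subr_ge0.
  have p2 : 0 <= `|L_V| * (a * r 0) by rewrite mulr_ge0 // mulr_ge0.
  have p3 : 0 <= (delta + 1) * r 0 by rewrite mulr_ge0 // ?addr_ge0 ?ltW //; lra.
  rewrite /K; rewrite -/(r 0) in h1; nra.
have [j [jlt tle]] := @grid_exists R T t hT tp.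
have jT0 : 0 <= j%:R * T by rewrite mulr_ge0 // ltW.
have hj : ((j%:R * T)%:E < tau_c vth thstar c)%E by apply: lt_le_trans ht; rewrite lte_fin.
have Vj := step j hj.
have rc := tauP _ jT0 hj.
have [n1 na ndel nd0] := nbig _ rc.
have gr := @gronwall R d fbar thstar L L0 hf vth hsol _ _ jT0 (ltW jlt).
have eb : expR (L * (t - j%:R * T)) <= expR (L * T).
  rewrite ler_expR; apply: ler_wpM2l; first exact: ltW.
  move: tle; rewrite -addn1 natrD mulrDl mul1r => tle; lra.
have rj : r (j%:R * T) <= 2 * V (vth (j%:R * T)).
  have := hVgrow _ nd0; have := enormB' (vth (j%:R * T)) thstar; rewrite -/a -/(r _); lra.
have qj : q ^+ j <= expR (- eps) ^+ j.
  by rewrite lerXn2r // ?nnegrE // expR_ge0.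
have ej : expR (- eps) ^+ j <= expR (- (delta1 * t)) * expR eps.
  rewrite -expRM_natr -expRD ler_expR.
  have : delta1 * t <= eps * j.+1%:R.
    have e1 : delta1 * T = eps by rewrite /delta1 divfK // gt_eqF.
    rewrite -(ler_pM2r hT) mulrAC e1; move: tle eps0; clear; nra.
  rewrite -addn1 natrD mulrDr mulr1 => hh; lra.
have := r0 (j%:R * T); have := r0 t; rewrite -/(r t) -/(r _) in gr *.
move=> rt rjt.
have eL0 : 0 <= expR (L * (t - j%:R * T)) by exact: expR_ge0.
have h1 : r t <= expR (L * T) * r (j%:R * T).
  apply: (le_trans gr); apply: ler_wpM2r => //.
have hV0j := hV0 (vth (j%:R * T)).
have hV00 := hV0 (vth 0).
have h2 : r (j%:R * T) <= 2 * (q ^+ j * (K * r 0)).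
  apply: (le_trans rj); rewrite ler_pM2l //; apply: (le_trans Vj); apply: ler_wpM2l => //.
  exact: exprn_ge0.
have h3 : q ^+ j <= expR (- (delta1 * t)) * expR eps by apply: le_trans ej.
have Kr : 0 <= K * r 0 by rewrite mulr_ge0 // ltW.
have h4 : q ^+ j * (K * r 0) <= expR (- (delta1 * t)) * expR eps * (K * r 0).
  by apply: ler_wpM2r.
apply: (le_trans h1).
have eLT0 : 0 <= expR (L * T) by exact: expR_ge0.
have h5 : expR (L * T) * r (j%:R * T) <= expR (L * T) * (2 * (expR (- (delta1 * t)) * expR eps * (K * r 0))).
  apply: ler_wpM2l => //; apply: (le_trans h2); rewrite ler_pM2l //.
apply: (le_trans h5). rewrite /b /r le_eqVlt; apply/orP; left; apply/eqP; ring.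
Qed.
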